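(* Let $\mathbb{N}_2=(\{0,1,2\},\oplus,0)$ be the monoid with $0\oplus x=x\oplus 0=x$ for all $x$ and $1\oplus1=1\oplus2=2\oplus1=2\oplus2=2$. The hypergraph $P_3$ with vertex set $\{A,B,C,D\}$ and hyperedges $\{A,B\},\{B,C\},\{C,D\}$ does not have the local-to-global consistency property for $\mathbb{N}_2$-relations.
   Context: $\mathbb{N}_2$ is a positive commutative monoid (positive: $p\oplus q=0$ implies $p=q=0$). Attributes have domains; for a finite attribute set $X$, an $X$-tuple assigns each $A\in X$ a value in its domain; $t[Y]$ is restriction. A $\mathbb{K}$-relation over $X$ is a finitely supported function $R$ from $X$-tuples to the monoid's universe; marginals are $R[Y](t)=\sum_{r: R(r)\neq 0,\, r[Y]=t}R(r)$. A hypergraph with hyperedges $X_1,\dots,X_m$ (vertices as attributes) has the local-to-global consistency property for $\mathbb{K}$-relations if every collection $R_1(X_1),\dots,R_m(X_m)$ that is pairwise consistent (for all $i,j$ some $W$ over $X_i\cup X_j$ has $W[X_i]=R_i$, $W[X_j]=R_j$) is globally consistent (some $W$ over $X_1\cup\dots\cup X_m$ has $W[X_i]=R_i$ for all $i$). *)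

(* Defs.v *)
From mathcomp Require Import all_boot.
Set Implicit Arguments. Unset Strict Implicit. Unset Printing Implicit Defensive.

Definition N2 := 'I_3.
Definition n2zero : N2 := ord0.
Definition n2two : N2 := inord 2.
Definition n2add (x y : N2) : N2 :=
  if x == n2zero then y else if y == n2zero then x else n2two.

(* All attributes range over a common domain V.  A tuple is
   encoded as a finite function Att -> option V; it is an X-tuple when it is
   defined exactly on X. *)
Section Rel.
Variables (Att : finType) (V : eqType).

Definition tup := {ffun Att -> option V}.

Definition is_tuple (X : {set Att}) (t : tup) : Prop :=
  forall a, (a \in X) = isSome (t a).

Definition restr (Y : {set Att}) (t : tup) : tup :=
  [ffun a => if a \in Y then t a else None].

Record Krel (X : {set Att}) := {
  kfun : tup -> N2;
  ksupp : seq tup;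
  ksupp_ok : forall r, kfun r != n2zero -> r \in ksupp;
  ktuple_ok : forall r, kfun r != n2zero -> is_tuple X r
}.

Definition marg (X : {set Att}) (R : Krel X) (Y : {set Att}) (t : tup) : N2 :=
  \big[n2add/n2zero]_(r <- undup (ksupp R) | (kfun R r != n2zero) && (restr Y r == t))
     kfun R r.

End Rel.

(* A hypergraph on vertex set Att with hyperedges E 0, ..., E (m-1). *)
Definition pairwise_consistent (Att : finType) (V : eqType) (m : nat)
    (E : 'I_m -> {set Att}) (R : forall i, Krel V (E i)) : Prop :=
  forall i j : 'I_m, exists W : Krel V (E i :|: E j),
    (forall t, marg W (E i) t = kfun (R i) t) /\
    (forall t, marg W (E j) t = kfun (R j) t).

Definition globally_consistent (Att : finType) (V : eqType) (m : nat)
    (E : 'I_m -> {set Att}) (R : forall i, Krel V (E i)) : Prop :=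
  exists W : Krel V (\bigcup_(i < m) E i),
    forall i : 'I_m, forall t, marg W (E i) t = kfun (R i) t.

Definition local_to_global (Att : finType) (m : nat) (E : 'I_m -> {set Att}) : Prop :=
  forall (V : eqType) (R : forall i, Krel V (E i)),
    pairwise_consistent R -> globally_consistent R.

(* vertices A,B,C,D = 0,1,2,3 in 'I_4; hyperedges {A,B},{B,C},{C,D} *)
Definition P3_edges (i : 'I_3) : {set 'I_4} := [set inord i; inord i.+1].

(* Main.v *)
Require Import Defs.
From mathcomp Require Import all_boot.
From mathcomp Require Import zify.
Set Implicit Arguments. Unset Strict Implicit. Unset Printing Implicit Defensive.

Notation T := (tup 'I_4 nat).
Definition code (t : T) : seq (option nat) := [seq t (inord n) | n <- iota 0 4].
Definition decode (c : seq (option nat)) : T := [ffun a : 'I_4 => nth None c a].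

Lemma code_decode c : size c = 4 -> code (decode c) = c.
Proof. by case: c => [|x0 [|x1 [|x2 [|x3 [|]]]]] //= _; rewrite /code /= !ffunE !inordK. Qed.

Lemma code_inj : injective code.
Proof.
move=> t t' H; apply/ffunP => a; rewrite -(inord_val a).
case: a => [[|[|[|[|n]]]] Ha] //=; by case: H.
Qed.

Lemma decode_code t : decode (code t) = t.
Proof. apply: code_inj; by rewrite code_decode. Qed.

Lemma eq_code (t t' : T) : (t == t') = (code t == code t').
Proof. by apply/eqP/eqP => [->|/code_inj]. Qed.

Definition memb (i : nat) n := (n == i) || (n == i.+1).
Definition crestr (Yb : nat -> bool) (c : seq (option nat)) :=
  [seq if Yb n then nth None c n else None | n <- iota 0 4].

Lemma code_restr (Y : {set 'I_4}) Yb t :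
  (forall n, n < 4 -> ((inord n : 'I_4) \in Y) = Yb n) ->
  code (restr Y t) = crestr Yb (code t).
Proof. by move=> hY; rewrite /code /crestr /= !ffunE !hY. Qed.

Lemma memP3 (i : 'I_3) n : n < 4 -> ((inord n : 'I_4) \in P3_edges i) = memb i n.
Proof.
move=> hn; have hi := ltn_ord i.
rewrite /P3_edges !inE /memb -!val_eqE /= !inordK //; lia.
Qed.

Lemma memU (i j : 'I_3) n : n < 4 ->
  ((inord n : 'I_4) \in P3_edges i :|: P3_edges j) = memb i n || memb j n.
Proof. by move=> hn; rewrite inE !memP3. Qed.

Lemma tup_ok (X : {set 'I_4}) Xb c :
  (forall n, n < 4 -> ((inord n : 'I_4) \in X) = Xb n) ->
  all (fun n => Xb n == isSome (nth None c n)) (iota 0 4) ->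
  is_tuple X (decode c).
Proof.
move=> hX /= /and5P [/eqP h0 /eqP h1 /eqP h2 /eqP h3 _] a.
rewrite -(inord_val a) ffunE.
case: a => [[|[|[|[|n]]]] Ha] //=; rewrite ?hX // inordK //.
Qed.

Notation CL := (seq (seq (option nat) * N2)).
Definition n2one : N2 := @Ordinal 3 1 isT.
Definition n2two' : N2 := @Ordinal 3 2 isT.
Lemma n2twoE : n2two = n2two'.
Proof. by apply: val_inj; rewrite /= inordK. Qed.
Definition n2add' (x y : N2) : N2 :=
  if x == n2zero then y else if y == n2zero then x else n2two'.
Lemma n2addE x y : n2add x y = n2add' x y.
Proof. by rewrite /n2add /n2add' n2twoE. Qed.

Fixpoint clookup (M : CL) (c : seq (option nat)) : N2 :=
  match M with [::] => n2zero | p :: M' => if p.1 == c then p.2 else clookup M' c end.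

Lemma clookupP M c : clookup M c != n2zero -> exists2 p, p \in M & p.1 = c.
Proof.
elim: M => [|p M IH] //=.
case: (p.1 =P c) => [<- _|_ /IH [q hq <-]]; first by exists p; rewrite ?inE ?eqxx.
by exists q; rewrite // inE hq orbT.
Qed.

Lemma clookup_notin M c : c \notin map fst M -> clookup M c = n2zero.
Proof.
elim: M => [|p M IH] //=; rewrite inE negb_or => /andP [h1 h2].
by rewrite eq_sym (negbTE h1) IH.
Qed.

Definition chk (Xb : nat -> bool) (M : CL) :=
  all (fun p => (size p.1 == 4) && all (fun n => Xb n == isSome (nth None p.1 n)) (iota 0 4)) M.

Section MK.
Variables (X : {set 'I_4}) (Xb : nat -> bool)
  (hX : forall n, n < 4 -> ((inord n : 'I_4) \in X) = Xb n) (M : CL) (HM : chk Xb M).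

Lemma mk_supp r : clookup M (code r) != n2zero -> r \in map (decode \o fst) M.
Proof.
move=> /clookupP [p hp e]; apply/mapP; exists p => //=; by rewrite e decode_code.
Qed.

Lemma mk_tup r : clookup M (code r) != n2zero -> is_tuple X r.
Proof.
move=> /clookupP [p hp e]; rewrite -(decode_code r) -e.
apply: tup_ok hX _; by move/allP: HM => /(_ p hp) /andP [].
Qed.

Definition mkK : Krel nat X :=
  {| kfun := fun t => clookup M (code t); ksupp := map (decode \o fst) M;
     ksupp_ok := mk_supp; ktuple_ok := mk_tup |}.
End MK.

Definition cmarg (M : CL) (Yb : nat -> bool) (c : seq (option nat)) : N2 :=
  foldr (fun p acc => if (clookup M p.1 != n2zero) && (crestr Yb p.1 == c)
                      then n2add' (clookup M p.1) acc else acc) n2zero M.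

Lemma big_foldr (I R : Type) (op : R -> R -> R) (idx : R) (l : seq I) (P : pred I) F :
  \big[op/idx]_(x <- l | P x) F x = foldr (fun x acc => if P x then op (F x) acc else acc) idx l.
Proof. by elim: l => [|x l IH]; rewrite ?big_nil ?big_cons ?IH. Qed.

Lemma marg_mkK X Xb hX M HM (Y : {set 'I_4}) Yb :
  (forall n, n < 4 -> ((inord n : 'I_4) \in Y) = Yb n) ->
  uniq (map fst M) ->
  forall t, marg (@mkK X Xb hX M HM) Y t = cmarg M Yb (code t).
Proof.
move=> hY hu t; rewrite /marg /=.
have hs : all (fun p => size p.1 == 4) M.
  by apply/allP => p hp; move/allP: HM => /(_ p hp) /andP [].
have hinj : {in map fst M &, injective decode}.
  move=> c1 c2 /mapP [p1 hp1 ->] /mapP [p2 hp2 ->] e.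
  rewrite -(code_decode (eqP (allP hs _ hp1))) -(code_decode (eqP (allP hs _ hp2))).
  by rewrite e.
rewrite undup_id; last first.
  by rewrite (map_comp decode fst) (map_inj_in_uniq hinj).
rewrite big_map big_foldr /cmarg.
have foldr_in : forall (A : eqType) (B : Type) (l : seq A) (f g : A -> B -> B) z,
   (forall x acc, x \in l -> f x acc = g x acc) -> foldr f z l = foldr g z l.
  move=> A B l f g z H; elim: l H => [|x l IH] H //=.
  by rewrite H ?inE ?eqxx // IH // => y acc hy; rewrite H // inE hy orbT.
apply: foldr_in => x acc hx /=.
have hp := eqP (allP hs x hx).
rewrite code_decode // eq_code (code_restr _ hY) code_decode //; by rewrite n2addE.
Qed.

Lemma foldr0 (CW l : CL) Yb c : all (fun p => crestr Yb p.1 != c) l ->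
  foldr (fun p acc => if (clookup CW p.1 != n2zero) && (crestr Yb p.1 == c)
                      then n2add' (clookup CW p.1) acc else acc) n2zero l = n2zero.
Proof. elim: l => [|p l IH] //= /andP [hp hl]; by rewrite IH // (negbTE hp) andbF. Qed.

Lemma cmarg_ext (CW CM : CL) Yb :
  all (fun p => crestr Yb p.1 \in map fst CM) CW ->
  all (fun k => cmarg CW Yb k == clookup CM k) (map fst CM) ->
  forall c, cmarg CW Yb c = clookup CM c.
Proof.
move=> h1 h2 c; case hc: (c \in map fst CM); first by apply/eqP; apply: (allP h2).
rewrite clookup_notin ?hc //.
have : all (fun p => crestr Yb p.1 != c) CW.
  apply/allP => p hp; apply/eqP => e; move: (allP h1 p hp); by rewrite e hc.
exact: foldr0.
Qed.

Definition mk1 (l : seq (seq (option nat))) : CL := [seq (k, n2one) | k <- l].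
Notation S := (@Some nat).
Notation N := (@None nat).

Definition CM1 : CL := mk1 [:: [:: S 0; S 0; N; N]; [:: S 1; S 0; N; N]; [:: S 2; S 0; N; N];
                              [:: S 3; S 1; N; N]; [:: S 4; S 1; N; N]; [:: S 5; S 1; N; N]].
Definition CM2 : CL := [:: ([:: N; S 0; S 0; N], n2two'); ([:: N; S 0; S 1; N], n2one);
                           ([:: N; S 1; S 1; N], n2two')].
Definition CM3 : CL := mk1 [:: [:: N; N; S 0; S 0]; [:: N; N; S 0; S 1]; [:: N; N; S 0; S 2];
                              [:: N; N; S 1; S 3]; [:: N; N; S 1; S 4]; [:: N; N; S 1; S 5]].
Definition CW01 : CL := mk1 [:: [:: S 0; S 0; S 0; N]; [:: S 1; S 0; S 0; N]; [:: S 2; S 0; S 1; N];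
                              [:: S 3; S 1; S 1; N]; [:: S 4; S 1; S 1; N]; [:: S 5; S 1; S 1; N]].
Definition CW12 : CL := mk1 [:: [:: N; S 0; S 0; S 0]; [:: N; S 0; S 0; S 1]; [:: N; S 0; S 0; S 2];
                              [:: N; S 0; S 1; S 3]; [:: N; S 1; S 1; S 4]; [:: N; S 1; S 1; S 5]].
Definition CW02 : CL := mk1 [:: [:: S 0; S 0; S 0; S 0]; [:: S 1; S 0; S 0; S 1]; [:: S 2; S 0; S 0; S 2];
                              [:: S 3; S 1; S 1; S 3]; [:: S 4; S 1; S 1; S 4]; [:: S 5; S 1; S 1; S 5]].

Definition CMs (i : 'I_3) : CL :=
  match val i with 0 => CM1 | 1 => CM2 | _ => CM3 end.
Definition CW (i j : 'I_3) : CL :=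
  match val i, val j with
  | 0, 0 => CM1 | 1, 1 => CM2 | 2, 2 => CM3
  | 0, 1 | 1, 0 => CW01 | 1, 2 | 2, 1 => CW12 | _, _ => CW02 end.

Lemma Rok : forall i : 'I_3, chk (memb i) (CMs i).
Proof. by case=> [[|[|[|n]]] Hi] //; vm_compute. Qed.

Definition R (i : 'I_3) : Krel nat (P3_edges i) := mkK (@memP3 i) (Rok i).

Definition goodW (i j : 'I_3) :=
  [&& chk (fun n => memb i n || memb j n) (CW i j), uniq (map fst (CW i j)),
      all (fun p => crestr (memb i) p.1 \in map fst (CMs i)) (CW i j),
      all (fun k => cmarg (CW i j) (memb i) k == clookup (CMs i) k) (map fst (CMs i)),
      all (fun p => crestr (memb j) p.1 \in map fst (CMs j)) (CW i j) &
      all (fun k => cmarg (CW i j) (memb j) k == clookup (CMs j) k) (map fst (CMs j))].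

Lemma goodWP : forall i j : 'I_3, goodW i j.
Proof.
case=> [[|[|[|n]]] Hi] //; case=> [[|[|[|m]]] Hj] //; vm_compute; reflexivity.
Qed.

Lemma pc : pairwise_consistent R.
Proof.
move=> i j; have /and5P [h1 h2 h3 h4 /andP [h5 h6]] := goodWP i j.
exists (mkK (@memU i j) h1); split => t /=.
  by rewrite (marg_mkK _ _ (@memP3 i)) // (cmarg_ext h3 h4).
by rewrite (marg_mkK _ _ (@memP3 j)) // (cmarg_ext h5 h6).
Qed.

Lemma n2add_eq0 x y : (n2add x y == n2zero) = (x == n2zero) && (y == n2zero).
Proof.
rewrite /n2add n2twoE.
by case: x => [[|[|[|?]]] ?] //; case: y => [[|[|[|?]]] ?].
Qed.

Lemma n2add_two x y : x != n2zero -> y != n2zero -> n2add x y = n2two.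
Proof. by rewrite /n2add => /negbTE -> /negbTE ->. Qed.

Section Sums.
Variables (I : eqType) (f : I -> N2) (P : pred I).

Lemma sum_eq0 l : {in l, forall x, f x != n2zero} ->
  (\big[n2add/n2zero]_(x <- l | P x) f x == n2zero) = (count P l == 0).
Proof.
elim: l => [|x l IH] hl; first by rewrite big_nil.
rewrite big_cons /=; have hx := hl x (mem_head _ _).
have hl' : {in l, forall y, f y != n2zero} by move=> y hy; apply: hl; rewrite inE hy orbT.
case: (P x) => /=; last by rewrite IH.
by rewrite n2add_eq0 (negbTE hx).
Qed.

Lemma sum_two l : {in l, forall x, f x != n2zero} -> 1 < count P l ->
  \big[n2add/n2zero]_(x <- l | P x) f x = n2two.
Proof.
elim: l => [|x l IH] hl //=.
rewrite big_cons; have hx := hl x (mem_head _ _).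
have hl' : {in l, forall y, f y != n2zero} by move=> y hy; apply: hl; rewrite inE hy orbT.
case: (P x) => /= h; last by apply: IH.
apply: n2add_two => //; rewrite sum_eq0 //; lia.
Qed.

Lemma sum_one l : {in l, forall x, f x != n2zero} ->
  \big[n2add/n2zero]_(x <- l | P x) f x = n2one -> count P l = 1.
Proof.
move=> hl h.
have h0 : count P l != 0 by rewrite -sum_eq0 // h.
case: (ltnP 1 (count P l)) => h1; last by lia.
by move: h; rewrite sum_two // n2twoE.
Qed.
End Sums.

Lemma count_in_cons (I J : eqType) (g : I -> J) k K s : k \notin K ->
  count (fun x => g x \in k :: K) s = count (fun x => g x == k) s + count (fun x => g x \in K) s.
Proof.
move=> hk; elim: s => //= x s ->; rewrite inE.
case: (g x =P k) => [->|_] /=; rewrite ?(negbTE hk) /=; lia.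
Qed.

Lemma count_split (I : Type) (a b : pred I) s :
  count a s = count (fun x => a x && b x) s + count (fun x => a x && ~~ b x) s.
Proof. elim: s => //= x s ->; case: (a x); case: (b x) => /=; lia. Qed.

Lemma pos (i : 'I_3) (r : T) n : n < 4 -> memb i n -> nth None (crestr (memb i) (code r)) n = r (inord n).
Proof.
move=> hn hm; rewrite /crestr (nth_map 0) ?size_iota // nth_iota // add0n hm.
by rewrite /code (nth_map 0) ?size_iota // nth_iota.
Qed.

Lemma not_global : ~ globally_consistent R.
Proof.
case=> W HW.
set s := [seq r <- undup (ksupp W) | kfun W r != n2zero].
have margE Y t : marg W Y t = \big[n2add/n2zero]_(r <- s | restr Y r == t) kfun W r.
  by rewrite /marg big_filter_cond.
have nz : {in s, forall r, kfun W r != n2zero} by move=> r; rewrite mem_filter => /andP [].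
have HWc i t : marg W (P3_edges i) t = clookup (CMs i) (code t) := HW i t.
have cr i r : code (restr (P3_edges i) r) = crestr (memb i) (code r) := code_restr r (@memP3 i).
have supp (i : 'I_3) r : r \in s -> crestr (memb i) (code r) \in map fst (CMs i).
  move=> hr; rewrite -cr; apply: contraT => hn.
  move: (HWc i (restr (P3_edges i) r)); rewrite clookup_notin // margE => /eqP.
  rewrite sum_eq0 // => /eqP h0.
  suff : 0 < count (fun x => restr (P3_edges i) x == restr (P3_edges i) r) s by rewrite h0.
  by rewrite -has_count; apply/hasP; exists r.
have cnt (i : 'I_3) k : size k = 4 -> clookup (CMs i) k = n2one ->
    count (fun r => crestr (memb i) (code r) == k) s = 1.
  move=> hk h1; move: (HWc i (decode k)); rewrite (code_decode hk) h1 margE.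
  move/(sum_one nz) => e; rewrite -[X in _ = X]e; apply: eq_count => r; by rewrite eq_code cr (code_decode hk).
pose e0 : 'I_3 := @Ordinal 3 0 isT.
pose e1 : 'I_3 := @Ordinal 3 1 isT.
pose e2 : 'I_3 := @Ordinal 3 2 isT.
pose b (r : T) := r (inord 1).
pose c (r : T) := r (inord 2).
have ha : count (fun r => b r == Some 0) s = 3.
  have key : all (fun u => (nth None u 1 == Some 0) ==
       (u \in [:: [:: Some 0; Some 0; None; None]; [:: Some 1; Some 0; None; None];
                  [:: Some 2; Some 0; None; None]])) (map fst (CMs e0)) by vm_compute.
  rewrite (@eq_in_count _ _ (fun r => crestr (memb e0) (code r) \in
       [:: [:: Some 0; Some 0; None; None]; [:: Some 1; Some 0; None; None];
           [:: Some 2; Some 0; None; None]])); last first.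
    move=> r hr; rewrite /b -(@pos e0 r 1) //; move: (supp e0 r hr).
    move: (crestr _ _) => u hu; exact: (eqP (allP key u hu)).
  rewrite !count_in_cons // !cnt //.
  by rewrite (@eq_count _ _ pred0) ?count_pred0.
have hb : count (fun r => c r == Some 0) s = 3.
  have key : all (fun u => (nth None u 2 == Some 0) ==
       (u \in [:: [:: None; None; Some 0; Some 0]; [:: None; None; Some 0; Some 1];
                  [:: None; None; Some 0; Some 2]])) (map fst (CMs e2)) by vm_compute.
  rewrite (@eq_in_count _ _ (fun r => crestr (memb e2) (code r) \in
       [:: [:: None; None; Some 0; Some 0]; [:: None; None; Some 0; Some 1];
           [:: None; None; Some 0; Some 2]])); last first.
    move=> r hr; rewrite /c -(@pos e2 r 2) //; move: (supp e2 r hr).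
    move: (crestr _ _) => u hu; exact: (eqP (allP key u hu)).
  rewrite !count_in_cons // !cnt //.
  by rewrite (@eq_count _ _ pred0) ?count_pred0.
have hc : count (fun r => (b r == Some 0) && (c r == Some 1)) s = 1.
  have key : all (fun u => ((nth None u 1 == Some 0) && (nth None u 2 == Some 1)) ==
       (u == [:: None; Some 0; Some 1; None])) (map fst (CMs e1)) by vm_compute.
  rewrite -[X in _ = X](cnt e1 [:: None; Some 0; Some 1; None]) //.
  apply: eq_in_count => r hr; rewrite /b /c -(@pos e1 r 1) // -(@pos e1 r 2) //.
  move: (supp e1 r hr); move: (crestr _ _) => u hu; exact: (eqP (allP key u hu)).
have hd : {in s, forall r, (c r == Some 0) -> (b r == Some 0)}.
  have key : all (fun u => (nth None u 2 == Some 0) ==> (nth None u 1 == Some 0))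
      (map fst (CMs e1)) by vm_compute.
  move=> r hr; rewrite /b /c -(@pos e1 r 1) // -(@pos e1 r 2) //.
  move: (supp e1 r hr); move: (crestr _ _) => u hu; exact: (implyP (allP key u hu)).
have := count_split (fun r => b r == Some 0) (fun r => c r == Some 0) s.
rewrite ha (@eq_in_count _ _ (fun r => c r == Some 0)); last first.
  by move=> r hr /=; case h: (c r == Some 0); rewrite ?andbT ?andbF ?(hd r hr h).
rewrite hb.
have : count (fun r => (b r == Some 0) && (c r == Some 1)) s <=
       count (fun r => (b r == Some 0) && ~~ (c r == Some 0)) s.
  apply: sub_count => r /= /andP [-> /eqP ->] //.
rewrite hc; lia.
Qed.

Theorem proposition10 : ~ local_to_global P3_edges.
Proof. move=> H; apply: not_global; exact: (H nat R pc). Qed.
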